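(* Let $k\ge 4$ and $n>2k$ be integers, and let $$\mathcal C=\mathcal A_3(n,k)=\Big\{A\in\binom{[n]}{k}: 1\in A,\ A\cap\{2,3,4\}\neq\varnothing\Big\}\cup\Big\{A\in\binom{[n]}{k}:\{2,3,4\}\subset A\Big\},$$ and let $\mathcal S_1=\{A\in\binom{[n]}{k}: 1\in A\}$. Then $$|\mathcal D(\mathcal C)|=5\sum_{i=0}^{k-2}\binom{n-4}{i}+3\sum_{i=0}^{k-3}\binom{n-4}{i},\qquad |\mathcal D(\mathcal S_1)|-|\mathcal D(\mathcal C)|=\binom{n-4}{k-1}-\binom{n-3}{k-2}.$$ In particular, if $(n-k-1)(n-k-2)<(n-3)(k-1)$ (equivalently $n^2-(3k+2)n+k^2+6k-1<0$), then $\mathcal C$ is an intersecting family with $|\mathcal D(\mathcal C)|>\sum_{0\le\ell<k}\binom{n-1}{\ell}$.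
   Context: $[n]=\{1,\dots,n\}$; $\binom{[n]}{k}$ is the family of all $k$-element subsets of $[n]$. $\mathcal D(\mathcal F):=\{F\setminus F' : F,F'\in\mathcal F\}$. Note $|\mathcal D(\mathcal S_1)|=\sum_{0\le\ell<k}\binom{n-1}{\ell}$. *)

(* Defs.v *)
(* Ground set [n] = {1,...,n} is modelled by 'I_n = {0,...,n-1}
   via the relabelling i |-> i-1 (so element 1 is value 0, {2,3,4} is {1,2,3}). *)
From mathcomp Require Import all_boot all_order all_algebra.
Set Implicit Arguments. Unset Strict Implicit. Unset Printing Implicit Defensive.

Definition has_val (n : nat) (A : {set 'I_n}) (i : nat) : bool :=
  [exists x in A, val x == i].

Definition diff_family (n : nat) (F : {set {set 'I_n}}) : {set {set 'I_n}} :=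
  [set F1 :\: F2 | F1 in F, F2 in F].

Definition S1 (n k : nat) : {set {set 'I_n}} :=
  [set A : {set 'I_n} | (#|A| == k) && has_val A 0].

Definition A3 (n k : nat) : {set {set 'I_n}} :=
  [set A : {set 'I_n} | (#|A| == k) &&
     ((has_val A 0 && [|| has_val A 1, has_val A 2 | has_val A 3])
      || [&& has_val A 1, has_val A 2 & has_val A 3])].

Definition intersecting (n : nat) (F : {set {set 'I_n}}) : Prop :=
  forall A B, A \in F -> B \in F -> A :&: B != set0.

(* Main.v *)
Require Import Defs.
From mathcomp Require Import all_boot all_order all_algebra.
From mathcomp Require Import zify ring.
Import GRing.Theory Num.Theory.


Lemma ex_sub (T : finType) (B : {set T}) j :
  j <= #|B| -> exists S : {set T}, S \subset B /\ #|S| = j.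
Proof.
move=> hj.
have : 0 < #|[set A : {set T} | A \subset B & #|A| == j]|.
  by rewrite cards_draws bin_gt0.
case/card_gt0P => S; rewrite inE => /andP[h1 /eqP h2]; by exists S.
Qed.

Lemma cards_disj (T : finType) (A B : {set T}) :
  A :&: B = set0 -> #|A :|: B| = #|A| + #|B|.
Proof. by move=> h; rewrite -cardsUI h cards0 addn0. Qed.

Lemma cnt (T : finType) (O : {set T}) (p : pred nat) :
  #|[set R : {set T} | (R \subset O) && p #|R|]| =
  \sum_(i < #|O|.+1 | p i) 'C(#|O|, i).
Proof.
under eq_bigr => i _ do rewrite -cards_draws.
rewrite -[LHS]sum1_card.
rewrite (partition_big (fun R : {set T} => (inord #|R| : 'I_#|O|.+1)) (fun i : 'I_#|O|.+1 => p i)).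
  apply: eq_bigr => i pi; rewrite -[RHS]sum1_card; apply: eq_bigl => R.
  rewrite !inE; case hR: (R \subset O) => //=.
  have hc : #|R| < #|O|.+1 by rewrite ltnS subset_leq_card.
  apply/andP/eqP => [[_ /eqP <-]|hi]; first by rewrite inordK.
  split; last by apply/eqP/val_inj; rewrite /= inordK // hi.
  by rewrite hi.
move=> R; rewrite inE => /andP[hR pR].
have hc : #|R| < #|O|.+1 by rewrite ltnS subset_leq_card.
by rewrite inordK.
Qed.

Lemma realize (T : finType) (Q a b G : {set T}) k :
  a \subset Q -> b \subset Q -> G :&: Q = a :\: b ->
  #|G :\: Q| + #|a| <= k -> k + #|G :\: Q| <= #|~: Q| + #|b| ->
  #|b| <= #|a| + #|G :\: Q| ->
  exists F F' : {set T}, [/\ #|F| = k, #|F'| = k, F :&: Q = a, F' :&: Q = b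
     & G = F :\: F'].
Proof.
move=> ha hb hG h1 h2 h3.
set R := G :\: Q in h1 h2 h3 *.
have RO : R \subset ~: Q by apply/subsetP => x; rewrite !inE => /andP[].
have cOR : #|~: Q :\: R| = #|~: Q| - #|R| by rewrite cardsDS.
have cR : #|R| <= #|~: Q| by rewrite subset_leq_card.
have [S [SO cS]] := ex_sub _ (~: Q :\: R) (k - #|a| - #|R|) ltac:(lia).
set Fo := R :|: S.
have RS : R :&: S = set0.
  apply/setP => x; have := subsetP SO x; rewrite !inE.
  by case: (x \in S); case: (x \in Q); case: (x \in G) => //= /(_ isT).
have cFo : #|Fo| = k - #|a| by rewrite cards_disj // cS; lia.
have FoO : Fo \subset ~: Q.
  apply/subsetP => x; rewrite inE => /orP[/(subsetP RO)//|/(subsetP SO)].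
  by rewrite inE => /andP[].
have cOF : #|~: Q :\: Fo| = #|~: Q| - #|Fo| by rewrite cardsDS.
have cFoO : #|Fo| <= #|~: Q| by rewrite subset_leq_card.
have [Y [YO cY]] := ex_sub _ (~: Q :\: Fo) (#|a| + #|R| - #|b|) ltac:(lia).
exists (a :|: Fo), (b :|: S :|: Y).
have mem : forall x, [/\ (x \in a) ==> (x \in Q), (x \in b) ==> (x \in Q),
   (x \in S) ==> ((x \notin Q) && (x \notin R)),
   (x \in Y) ==> [&& x \notin Q, x \notin R & x \notin S]
   & (x \in G) = ((x \in Q) && (x \in a) && (x \notin b)) || (x \in R)].
  move=> x; split.
  - by apply/implyP => /(subsetP ha).
  - by apply/implyP => /(subsetP hb).
  - by apply/implyP => /(subsetP SO); rewrite !inE => /andP[-> ->].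
  - apply/implyP => /(subsetP YO); rewrite !inE negb_or.
    by case/andP => /andP[-> ->] ->.
  - have := congr1 (fun X : {set T} => x \in X) hG; rewrite /= !inE => e.
    rewrite ?inE; move: e.
    by case: (x \in G); case: (x \in Q); case: (x \in a); case: (x \in b).
split.
- rewrite cards_disj ?cFo; first lia.
  apply/setP => x; case: (mem x); rewrite !inE.
  by case: (x \in a); case: (x \in b); case: (x \in Q); case: (x \in S); case: (x \in Y); case: (x \in G).
- rewrite cards_disj ?cY; first rewrite cards_disj ?cS; first lia.
  + apply/setP => x; case: (mem x); rewrite !inE.
    by case: (x \in a); case: (x \in b); case: (x \in Q); case: (x \in S); case: (x \in Y); case: (x \in G).
  + apply/setP => x; case: (mem x); rewrite !inE.
    by case: (x \in a); case: (x \in b); case: (x \in Q); case: (x \in S); case: (x \in Y); case: (x \in G).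
- apply/setP => x; case: (mem x); rewrite !inE.
  by case: (x \in a); case: (x \in b); case: (x \in Q); case: (x \in S); case: (x \in Y); case: (x \in G).
- apply/setP => x; case: (mem x); rewrite !inE.
  by case: (x \in a); case: (x \in b); case: (x \in Q); case: (x \in S); case: (x \in Y); case: (x \in G).
- apply/setP => x; case: (mem x); rewrite !inE.
  by case: (x \in a); case: (x \in b); case: (x \in Q); case: (x \in S); case: (x \in Y); case: (x \in G).
Qed.


Definition e0 m : 'I_(m.+4) := @Ordinal (m.+4) 0 isT.
Definition e1 m : 'I_(m.+4) := @Ordinal (m.+4) 1 isT.
Definition e2 m : 'I_(m.+4) := @Ordinal (m.+4) 2 isT.
Definition e3 m : 'I_(m.+4) := @Ordinal (m.+4) 3 isT.
Definition QQ m : {set 'I_(m.+4)} := [set x | nat_of_ord x < 4].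
Definition vset m (s : nat -> bool) : {set 'I_(m.+4)} := [set x | (nat_of_ord x < 4) && s (nat_of_ord x)].

Lemma has_valE m (F : {set 'I_(m.+4)}) (x : 'I_(m.+4)) : has_val F (val x) = (x \in F).
Proof.
apply/existsP/idP => [[y /andP[yF /eqP hy]]|xF]; first by rewrite -(val_inj hy).
by exists x; rewrite xF eqxx.
Qed.

Lemma ord4 m (x : 'I_(m.+4)) :
  x = e0 m \/ x = e1 m \/ x = e2 m \/ x = e3 m \/ 4 <= nat_of_ord x.
Proof.
case: x => [[|[|[|[|j]]]] hx].
- by left; apply: val_inj.
- by right; left; apply: val_inj.
- by right; right; left; apply: val_inj.
- by right; right; right; left; apply: val_inj.
- by right; right; right; right.
Qed.

Arguments ord4 {m}.

Lemma lt4F m (x : 'I_(m.+4)) : 4 <= nat_of_ord x -> (nat_of_ord x < 4) = false.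
Proof. by move=> h; rewrite ltnNge h. Qed.

Lemma cardIU1 (T : finType) (G B : {set T}) a :
  #|G :&: (a |: B)| = ((a \in G) && (a \notin B)) + #|G :&: B|.
Proof.
case aG: (a \in G) => /=.
  have -> : G :&: (a |: B) = a |: (G :&: B).
    by apply/setP => x; rewrite !inE; case: eqP => // ->; rewrite aG.
  by rewrite cardsU1 !inE aG.
rewrite add0n; have -> // : G :&: (a |: B) = G :&: B.
by apply/setP => x; rewrite !inE; case: eqP => // ->; rewrite aG.
Qed.

Lemma cardI1 (T : finType) (G : {set T}) a : #|G :&: [set a]| = (a \in G).
Proof.
case aG: (a \in G).
  have -> : G :&: [set a] = [set a].
    by apply/setP => x; rewrite !inE; case: (x =P a) => [->|]; rewrite ?aG ?andbF.
  by rewrite cards1.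
have -> : G :&: [set a] = set0.
  by apply/setP => x; rewrite !inE; case: (x =P a) => [->|]; rewrite ?aG ?andbF.
by rewrite cards0.
Qed.

Lemma cardIQ m (G : {set 'I_(m.+4)}) :
  #|G :&: QQ m| = (e0 m \in G) + (e1 m \in G) + (e2 m \in G) + (e3 m \in G).
Proof.
have -> : QQ m = e0 m |: (e1 m |: (e2 m |: [set e3 m])).
  apply/setP => x; rewrite !inE; case: (ord4 x) => [->|[->|[->|[->|h]]]] //.
  by rewrite lt4F // -!val_eqE /=; lia.
by rewrite !cardIU1 cardI1 !inE /= !andbT; lia.
Qed.

Lemma cardQ m : #|QQ m| = 4.
Proof. by rewrite -[QQ m]setIid cardIQ !inE. Qed.

Lemma cardQC m : #|~: QQ m| = m.
Proof. by have := cardsC (QQ m); rewrite cardQ card_ord; lia. Qed.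

Lemma split_card (T : finType) (A : pred {set T}) (f : {set T} -> bool) :
  #|[set G | A G]| = \sum_(b : bool) #|[set G | A G && (f G == b)]|.
Proof.
rewrite big_bool /= -(cardsID [set G | f G] [set G | A G]).
have -> : [set G | A G && (f G == true)] = [set G | A G] :&: [set G | f G].
  by apply/setP => G; rewrite !inE; case: (f G); rewrite ?andbT ?andbF.
have -> // : [set G | A G && (f G == false)] = [set G | A G] :\: [set G | f G].
by apply/setP => G; rewrite !inE; case: (f G); rewrite ?andbT ?andbF.
Qed.

Lemma PRQ (T : finType) (P R Q : {set T}) :
  P \subset Q -> R \subset ~: Q -> (P :|: R) :\: Q = R.
Proof.
move=> /subsetP h1 /subsetP h2; apply/setP => x; rewrite !inE.
move: (h1 x) (h2 x) => /implyP i1 /implyP i2; move: i1 i2; rewrite !inE.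
by case: (x \in P); case: (x \in Q); case: (x \in R).
Qed.

Lemma leaf m (q : bool -> bool -> bool -> bool -> nat -> bool) b0 b1 b2 b3 :
  #|[set G : {set 'I_(m.+4)} | [&& q (e0 m \in G) (e1 m \in G) (e2 m \in G) (e3 m \in G) #|G :\: QQ m|,
      (e0 m \in G) == b0, (e1 m \in G) == b1, (e2 m \in G) == b2 & (e3 m \in G) == b3]]|
  = \sum_(i < m.+1 | q b0 b1 b2 b3 i) 'C(m, i).
Proof.
set P := vset m (fun i => nth false [:: b0; b1; b2; b3] i).
have -> : [set G : {set 'I_(m.+4)} | [&& q (e0 m \in G) (e1 m \in G) (e2 m \in G) (e3 m \in G) #|G :\: QQ m|,
      (e0 m \in G) == b0, (e1 m \in G) == b1, (e2 m \in G) == b2 & (e3 m \in G) == b3]]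
   = (fun R : {set 'I_(m.+4)} => P :|: R) @: [set R : {set 'I_(m.+4)} | (R \subset ~: QQ m) && q b0 b1 b2 b3 #|R|].
  apply/setP => G; rewrite inE; apply/idP/imsetP.
    case/and5P => hq /eqP h0 /eqP h1 /eqP h2 /eqP h3.
    exists (G :\: QQ m).
      rewrite inE -h0 -h1 -h2 -h3 hq andbT.
      by apply/subsetP => x; rewrite !inE => /andP[].
    apply/setP => x; rewrite !inE; case: (ord4 x) => [->|[->|[->|[->|h]]]] /=;
      rewrite ?h0 ?h1 ?h2 ?h3 ?orbF //.
    by rewrite lt4F.
  case=> R; rewrite inE => /andP[RQ hq] ->.
  have eR : forall x, x \in QQ m -> x \in R = false.
    by move=> x xQ; apply/negbTE/negP => /(subsetP RQ); rewrite inE xQ.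
  rewrite PRQ //; last by apply/subsetP => x; rewrite !inE => /andP[].
  rewrite !inE /= ![_ \in R]eR ?inE //= !orbF eqxx hq.
  by rewrite !eqxx.
rewrite card_in_imset.
  by rewrite (cnt _ (~: QQ m) (q b0 b1 b2 b3)) cardQC.
move=> R1 R2; rewrite !inE => /andP[h1 _] /andP[h2 _] e.
have PQ : P \subset QQ m by apply/subsetP => x; rewrite !inE => /andP[].
by rewrite -(PRQ _ _ _ _ PQ h1) e PRQ.
Qed.

Lemma totalC m (q : bool -> bool -> bool -> bool -> nat -> bool) :
  #|[set G : {set 'I_(m.+4)} | q (e0 m \in G) (e1 m \in G) (e2 m \in G) (e3 m \in G) #|G :\: QQ m|]|
  = \sum_(b0 : bool) \sum_(b1 : bool) \sum_(b2 : bool) \sum_(b3 : bool)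
      \sum_(i < m.+1 | q b0 b1 b2 b3 i) 'C(m, i).
Proof.
rewrite (split_card _ _ (fun G => e0 m \in G)); apply: eq_bigr => b0 _.
rewrite (split_card _ _ (fun G => e1 m \in G)); apply: eq_bigr => b1 _.
rewrite (split_card _ _ (fun G => e2 m \in G)); apply: eq_bigr => b2 _.
rewrite (split_card _ _ (fun G => e3 m \in G)); apply: eq_bigr => b3 _.
rewrite -leaf; apply: eq_card => G; rewrite !inE.
by rewrite !andbA.
Qed.


Definition qC (k : nat) (b0 b1 b2 b3 : bool) (r : nat) : bool :=
  [&& ~~ (b0 && [|| b1, b2 | b3]), ~~ [&& b1, b2 & b3],
      b0 + b1 + b2 + b3 + r < k & [|| b0, b1, b2, b3 | r.+2 <= k]].

Definition cA3 (b0 b1 b2 b3 : bool) := (b0 && [|| b1, b2 | b3]) || [&& b1, b2 & b3].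

Lemma inA3 m k (F : {set 'I_(m.+4)}) :
  (F \in A3 m.+4 k) = (#|F| == k) &&
     cA3 (e0 m \in F) (e1 m \in F) (e2 m \in F) (e3 m \in F).
Proof.
rewrite inE.
have -> : has_val F 0 = (e0 m \in F) := has_valE m F (e0 m).
have -> : has_val F 1 = (e1 m \in F) := has_valE m F (e1 m).
have -> : has_val F 2 = (e2 m \in F) := has_valE m F (e2 m).
have -> : has_val F 3 = (e3 m \in F) := has_valE m F (e3 m).
by [].
Qed.

Lemma A3_inter {m k} {F F' : {set 'I_(m.+4)}} :
  F \in A3 m.+4 k -> F' \in A3 m.+4 k -> exists x, (x \in F) && (x \in F').
Proof.
rewrite !inA3 => /andP[_ h] /andP[_ h'].
case E0: ((e0 m \in F) && (e0 m \in F')); first by exists (e0 m).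
case E1: ((e1 m \in F) && (e1 m \in F')); first by exists (e1 m).
case E2: ((e2 m \in F) && (e2 m \in F')); first by exists (e2 m).
case E3: ((e3 m \in F) && (e3 m \in F')); first by exists (e3 m).
move: h h' E0 E1 E2 E3; rewrite /cA3.
by case: (e0 m \in F); case: (e1 m \in F); case: (e2 m \in F); case: (e3 m \in F);
   case: (e0 m \in F'); case: (e1 m \in F'); case: (e2 m \in F'); case: (e3 m \in F').
Qed.

Lemma cardV m (s : nat -> bool) : #|vset m s| = s 0 + s 1 + s 2 + s 3.
Proof.
have -> : vset m s = vset m s :&: QQ m.
  by apply/setP => x; rewrite !inE; case: (nat_of_ord x < 4); rewrite ?andbF ?andbT.
by rewrite cardIQ !inE.
Qed.

Lemma build m k (G : {set 'I_(m.+4)}) (sa sb : nat -> bool) :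
  G :&: QQ m = vset m sa :\: vset m sb ->
  #|G :\: QQ m| + #|vset m sa| <= k -> k + #|G :\: QQ m| <= m + #|vset m sb| ->
  #|vset m sb| <= #|vset m sa| + #|G :\: QQ m| ->
  cA3 (sa 0) (sa 1) (sa 2) (sa 3) -> cA3 (sb 0) (sb 1) (sb 2) (sb 3) ->
  G \in diff_family (A3 m.+4 k).
Proof.
move=> hG h1 h2 h3 ca cb.
have sQ : forall s, vset m s \subset QQ m.
  by move=> s; apply/subsetP => x; rewrite !inE => /andP[].
have [F [F' [cF cF' FQ F'Q ->]]] := @realize _ (QQ m) _ _ G k (sQ sa) (sQ sb) hG h1 ltac:(rewrite cardQC; lia) h3.
have eF : forall (H : {set 'I_(m.+4)}) s, H :&: QQ m = vset m s ->
   cA3 (s 0) (s 1) (s 2) (s 3) -> H \in A3 m.+4 #|H|.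
  move=> H s hH cs; rewrite inA3 eqxx /=.
  have e : forall x, x \in QQ m -> (x \in H) = (x \in vset m s).
    by move=> x xQ; rewrite -hH inE xQ andbT.
  by rewrite !e ?inE //=.
apply/imset2P; exists F F'; first by rewrite -cF (eF _ sa FQ ca).
  by rewrite -cF' (eF _ sb F'Q cb).
by [].
Qed.

Lemma setQ_eq m (G : {set 'I_(m.+4)}) (sa sb : nat -> bool) :
  (e0 m \in G) = sa 0 && ~~ sb 0 -> (e1 m \in G) = sa 1 && ~~ sb 1 ->
  (e2 m \in G) = sa 2 && ~~ sb 2 -> (e3 m \in G) = sa 3 && ~~ sb 3 ->
  G :&: QQ m = vset m sa :\: vset m sb.
Proof.
move=> h0 h1 h2 h3; apply/setP => x; rewrite !inE.
case: (ord4 x) => [->|[->|[->|[->|h]]]]; rewrite ?h0 ?h1 ?h2 ?h3 /= ?andbT;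
  try by rewrite andbC.
by rewrite lt4F // !andbF.
Qed.

Ltac setQtac E0 E1 E2 E3 :=
  apply: setQ_eq; rewrite ?E0 ?E1 ?E2 ?E3; by [].

Ltac try_build r E0 E1 E2 E3 sa sb :=
  apply: (@build _ _ _ sa sb); [ setQtac E0 E1 E2 E3 | rewrite ?cardV -/r /=; lia
  | rewrite ?cardV -/r /=; lia | rewrite ?cardV -/r /=; lia | by [] | by [] ].

Lemma DC_char m k : 4 <= k -> 2 * k < m.+4 ->
  diff_family (A3 m.+4 k) =
  [set G : {set 'I_(m.+4)} | qC k (e0 m \in G) (e1 m \in G) (e2 m \in G) (e3 m \in G) #|G :\: QQ m|].
Proof.
move=> hk hn; apply/setP => G; rewrite [in RHS]inE; apply/idP/idP.
  case/imset2P => F F' hF hF' ->.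
  have [x /andP[xF xF']] := A3_inter hF hF'.
  have hlt : #|F :\: F'| < #|F|.
    apply: proper_card; apply/properP; split; first exact: subsetDl.
    by exists x; rewrite // inE xF'.
  have c1 := cardsID (QQ m) (F :\: F').
  have c2 := cardsID (QQ m) F.
  have c3 : #|(F :\: F') :\: QQ m| <= #|F :\: QQ m|.
    by apply: subset_leq_card; apply: setSD; apply: subsetDl.
  rewrite !cardIQ in c1 c2.
  move: hF hF'; rewrite !inA3 => /andP[/eqP cF hF] /andP[_ hF'].
  rewrite cF in hlt c2.
  move: c1 c2 c3 hlt hF hF'.
  rewrite !inE /qC /cA3.
  move: (#|(F :\: F') :\: QQ m|) (#|F :\: QQ m|) (#|F :\: F'|) => r s t.
  case: (e0 m \in F); case: (e1 m \in F); case: (e2 m \in F); case: (e3 m \in F);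
  case: (e0 m \in F'); case: (e1 m \in F'); case: (e2 m \in F'); case: (e3 m \in F');
  move=> //= *; lia.
move=> hq.
have : qC k (e0 m \in G) (e1 m \in G) (e2 m \in G) (e3 m \in G) #|G :\: QQ m| := hq.
case/and4P => hA hB hsum hemp; clear hq.
set r := #|G :\: QQ m| in hsum hemp.
have [hr|hr] := leqP r 0;
case E0: (e0 m \in G) hA hB hsum hemp; case E1: (e1 m \in G); case E2: (e2 m \in G);
  case E3: (e3 m \in G) => //= _ _ hsum hemp.
all: first [ try_build r E0 E1 E2 E3 (fun i => (i == 0) || (i == 1)) (fun i => (i == 0) || (i == 1))
           | try_build r E0 E1 E2 E3 (fun i => [|| i == 0, i == 1 | i == 2]) (fun i => [|| i == 1, i == 2 | i == 3])
           | try_build r E0 E1 E2 E3 (fun i => (i == 0) || (i == 1)) (fun i => [|| i == 1, i == 2 | i == 3])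
           | try_build r E0 E1 E2 E3 (fun i => (i == 0) || (i == 1)) (fun i => (i == 0) || (i == 2))
           | try_build r E0 E1 E2 E3 (fun i => (i == 0) || (i == 2)) (fun i => (i == 0) || (i == 1))
           | try_build r E0 E1 E2 E3 (fun i => (i == 0) || (i == 3)) (fun i => (i == 0) || (i == 1))
           | try_build r E0 E1 E2 E3 (fun i => [|| i == 0, i == 1 | i == 2]) (fun i => (i == 0) || (i == 3))
           | try_build r E0 E1 E2 E3 (fun i => [|| i == 0, i == 1 | i == 3]) (fun i => (i == 0) || (i == 2))
           | try_build r E0 E1 E2 E3 (fun i => [|| i == 0, i == 2 | i == 3]) (fun i => (i == 0) || (i == 1)) ].
Qed.


Lemma inS1 m k (F : {set 'I_(m.+4)}) :
  (F \in S1 m.+4 k) = (#|F| == k) && (e0 m \in F).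
Proof.
rewrite inE.
by have -> : has_val F 0 = (e0 m \in F) := has_valE m F (e0 m).
Qed.

Lemma DS_char m k : 1 <= k -> 2 * k < m.+4 ->
  diff_family (S1 m.+4 k) =
  [set G : {set 'I_(m.+4)} | (G \subset ~: [set e0 m]) && (#|G| < k)].
Proof.
move=> hk hn; apply/setP => G; rewrite [in RHS]inE; apply/idP/idP.
  case/imset2P => F F' hF hF' ->.
  move: hF hF'; rewrite !inS1 => /andP[/eqP cF e0F] /andP[_ e0F'].
  apply/andP; split.
    apply/subsetP => x; rewrite !inE => /andP[xF' _]; apply/negP => /eqP ex.
    by move: xF'; rewrite ex e0F'.
  rewrite -cF; apply: proper_card; apply/properP; split; first exact: subsetDl.
  by exists (e0 m); rewrite // inE e0F'.
case/andP => sub hlt.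
have GI : G :&: [set e0 m] = set0.
  apply/setP => x; rewrite !inE; apply/negbTE/negP => /andP[xG /eqP ex].
  by move/subsetP: sub => /(_ x xG); rewrite ex !inE eqxx.
have GD : G :\: [set e0 m] = G.
  apply/setP => x; rewrite !inE; case xG: (x \in G); rewrite ?andbF ?andbT //.
  by move/subsetP: sub => /(_ x xG); rewrite !inE.
have cC : #|~: [set e0 m]| = m.+3 by rewrite cardsC1 card_ord.
have h1 : #|G :\: [set e0 m]| + #|[set e0 m]| <= k.
  rewrite GD cards1; lia.
have h2 : k + #|G :\: [set e0 m]| <= #|~: [set e0 m]| + #|[set e0 m]|.
  rewrite GD cC cards1; lia.
have h3 : #|[set e0 m]| <= #|[set e0 m]| + #|G :\: [set e0 m]|.
  rewrite cards1; lia.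
have [F [F' [cF cF' FQ F'Q ->]]] :=
  @realize _ [set e0 m] [set e0 m] [set e0 m] G k (subxx _) (subxx _)
    ltac:(by rewrite setDv GI) h1 h2 h3.
have eF : forall H : {set 'I_(m.+4)}, H :&: [set e0 m] = [set e0 m] -> e0 m \in H.
  by move=> H hH; have := set11 (e0 m); rewrite -{1}hH inE => /andP[].
apply/imset2P; exists F F'; rewrite ?inS1 ?cF ?cF' ?eqxx ?eF //.
Qed.

Lemma DS_card m k : 1 <= k -> 2 * k < m.+4 ->
  #|diff_family (S1 m.+4 k)| = \sum_(0 <= l < k) 'C(m.+3, l).
Proof.
move=> hk hn; rewrite DS_char //.
have cC : #|~: [set e0 m]| = m.+3 by rewrite cardsC1 card_ord.
rewrite (cnt _ (~: [set e0 m]) (fun i => i < k)) cC big_mkord.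
rewrite (@big_ord_widen _ _ _ k m.+4 (fun i => 'C(m.+3, i))) //; lia.
Qed.

Definition KC (k : nat) (b0 b1 b2 b3 : bool) : nat :=
  if (b0 && [|| b1, b2 | b3]) || [&& b1, b2 & b3] then 0
  else if b0 + b1 + b2 + b3 == 2 then k - 2 else k - 1.

Lemma qC_KC k b0 b1 b2 b3 r : 4 <= k -> qC k b0 b1 b2 b3 r = (r < KC k b0 b1 b2 b3).
Proof.
move=> hk; rewrite /qC /KC.
by case: b0; case: b1; case: b2; case: b3 => /=; apply/idP/idP; lia.
Qed.

Lemma sumK m K : K <= m.+1 ->
  \sum_(i < m.+1 | i < K) 'C(m, i) = \sum_(0 <= i < K) 'C(m, i).
Proof. by move=> h; rewrite big_mkord (big_ord_widen _ _ h). Qed.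

Lemma DC_card m k : 4 <= k -> 2 * k < m.+4 ->
  #|diff_family (A3 m.+4 k)| =
  5 * \sum_(0 <= i < k - 1) 'C(m, i) + 3 * \sum_(0 <= i < k - 2) 'C(m, i).
Proof.
move=> hk hn; rewrite DC_char //.
have -> : [set G : {set 'I_(m.+4)} | qC k (e0 m \in G) (e1 m \in G) (e2 m \in G) (e3 m \in G) #|G :\: QQ m|]
  = [set G : {set 'I_(m.+4)} | #|G :\: QQ m| < KC k (e0 m \in G) (e1 m \in G) (e2 m \in G) (e3 m \in G)].
  by apply/setP => G; rewrite !inE qC_KC.
rewrite (totalC m (fun b0 b1 b2 b3 r => r < KC k b0 b1 b2 b3)).
rewrite !big_bool /KC /=.
rewrite !sumK; try lia.
rewrite big_geq //; lia.
Qed.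


Lemma pascal N j : \sum_(0 <= l < j.+1) 'C(N.+1, l) =
  \sum_(0 <= l < j.+1) 'C(N, l) + \sum_(0 <= l < j) 'C(N, l).
Proof.
rewrite big_nat_recl // [in RHS]big_nat_recl // !bin0.
rewrite (eq_bigr (fun i => 'C(N, i.+1) + 'C(N, i))); last by move=> i _; rewrite binS.
by rewrite big_split /= addnA.
Qed.

Lemma binineq m j : (m - j - 1) * (m - j - 2) < (m + 1) * (j + 3) -> j.+4 <= m ->
  'C(m, j.+3) < 'C(m.+1, j.+2).
Proof.
move=> h hj.
have e1 := mul_bin_down m.+1 j.+3.
have e2 := mul_bin_left m.+1 j.+2.
have pos : 0 < 'C(m.+1, j.+2) by rewrite bin_gt0; lia.
have e1' : m.+1 * 'C(m, j.+3) = (m - j - 2) * 'C(m.+1, j.+3) by rewrite e1 /=; congr (_ * _); lia.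
have e2' : j.+3 * 'C(m.+1, j.+3) = (m - j - 1) * 'C(m.+1, j.+2) by rewrite e2; congr (_ * _); lia.
set X := 'C(m, j.+3) in e1' *; set Y := 'C(m.+1, j.+2) in e2' pos *; set Z := 'C(m.+1, j.+3) in e1' e2'.
have t1 : (j+3) * (m.+1 * X) = (j+3) * ((m-j-2) * Z) by rewrite e1'.
have t2 : (m-j-2) * (j.+3 * Z) = (m-j-2)*((m-j-1)*Y) by rewrite e2'.
have key : (m + 1) * (j + 3) * X = (m - j - 1) * (m - j - 2) * Y.
  clear -t1 t2; move: t1 t2; move: (m - j - 2) (m - j - 1) => u v t1 t2.
  have -> : (m + 1) * (j + 3) * X = (j+3) * (m.+1 * X) by ring.
  rewrite t1.
  have -> : (j + 3) * (u * Z) = u * (j.+3 * Z) by ring.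
  rewrite t2; ring.
move: key h pos; set P := (m + 1) * (j + 3); set A := (m - j - 1) * (m - j - 2).
move=> key h pos; rewrite ltnNge; apply/negP => hle.
have : P * Y <= P * X by rewrite leq_mul2l hle orbT.
rewrite key leqNgt => /negP; apply.
by rewrite ltn_pmul2r.
Qed.

Theorem mainTheorem11 (n k : nat) (hk : 4 <= k) (hn : 2 * k < n) :
  #|diff_family (A3 n k)| =
    (5 * (\sum_(0 <= i < k - 1) 'C(n - 4, i)) +
     3 * (\sum_(0 <= i < k - 2) 'C(n - 4, i)))%N
  /\ ((#|diff_family (S1 n k)|%:Z - #|diff_family (A3 n k)|%:Z)%R =
      ('C(n - 4, k - 1)%:Z - 'C(n - 3, k - 2)%:Z)%R)
  /\ ((n - k - 1) * (n - k - 2) < (n - 3) * (k - 1) ->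
      intersecting (A3 n k) /\
      (\sum_(0 <= l < k) 'C(n - 1, l) < #|diff_family (A3 n k)|)%N).
Proof.
have [m em] : exists m, n = m.+4 by exists (n - 4); lia.
subst n.
have [j ej] : exists j, k = j.+4 by exists (k - 4); lia.
have dc := DC_card m k hk hn.
have ds := DS_card m k ltac:(lia) hn.
subst k.
have -> : m.+4 - 4 = m by lia.
have -> : m.+4 - 3 = m.+1 by lia.
have -> : m.+4 - 1 = m.+3 by lia.
have e1 : j.+4 - 1 = j.+3 by lia.
have e2 : j.+4 - 2 = j.+2 by lia.
rewrite e1 e2 in dc *.
rewrite !pascal in ds.
rewrite !(big_nat_recr _ _ _ (leq0n _)) /= in ds dc.
rewrite binS.
split; first by rewrite dc !(big_nat_recr _ _ _ (leq0n _)).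
split; first by rewrite ds dc; lia.
move=> h; split.
  move=> A B hA hB; have [x /andP[xA xB]] := A3_inter hA hB.
  by apply/set0Pn; exists x; rewrite inE xA xB.
have hb : 'C(m, j.+3) < 'C(m.+1, j.+2).
  apply: binineq; last by lia.
  move: h; have -> : m.+4 - j.+4 - 1 = m - j - 1 by lia.
  have -> : m.+4 - j.+4 - 2 = m - j - 2 by lia.
  by rewrite addn1 addn3.
rewrite binS in hb.
rewrite !pascal !(big_nat_recr _ _ _ (leq0n _)) /= dc; lia.
Qed.
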